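(* Let $n\ge 3$. A polygon $Q\in\mathbf S(s_1,\dots,s_n)$ is a critical point of the restriction of $\mathcal P$ to the smooth manifold $\mathbf S(s_1,\dots,s_n)$ if and only if $Q$ is tangential.
   Context: Fix $n\ge 3$ pairwise non-parallel lines $s_1,\dots,s_n\subset\mathbb{R}^2$ through the origin, each with a fixed direction $\vec s_i$. For lines $e_i\parallel s_i$, $Q=Q(e_1,\dots,e_n)$ is the closed polygon with consecutive vertices $v_i=e_i\cap e_{i+1}$ (indices mod $n$), and $\widetilde{\mathbf S}(s_1,\dots,s_n)$ is the space of such polygons modulo translations. Oriented area: $\mathcal A=\frac12\sum_i(x_iy_{i+1}-x_{i+1}y_i)$ for vertices $v_i=(x_i,y_i)$. $\mathbf S(s_1,\dots,s_n)=\{Q\in\widetilde{\mathbf S}:|\mathcal A(Q)|=1\}$. Each $e_i$ is oriented along $\vec s_i$, giving $\vec e_i$; the perimeter is $\mathcal P(Q)=\sum_i\operatorname{sign}_Q(i)|v_iv_{i+1}|$ with $\operatorname{sign}_Q(i)=1$ if $\vec e_i$ is codirected with $\overrightarrow{v_iv_{i+1}}$ and $-1$ otherwise (a linear function on $\widetilde{\mathbf S}$). $Q$ is tangential if there is a circle $\sigma$ tangent to every $e_i$ such that either $\sigma$ lies to the left of all $\vec e_i$ or $\sigma$ lies to the right of all $\vec e_i$. *)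

(* Defs.v *)
From Stdlib Require Import Reals Lra Lia Arith.
Open Scope R_scope.

(* Conventions.
   - Indices are natural numbers taken modulo n.
   - The direction of s_i is the vector (sx i, sy i).
   - cross (a1,a2) (b1,b2) := a1*b2 - a2*b1.
   - A line e_i parallel to s_i is encoded by its offset c i :
       e_i = { p | cross s_i p = c i }.
     Every line parallel to s_i has exactly one such offset, so a polygon
     Q(e_1,...,e_n) is given by the offset vector c : nat -> R
     (only c 0, ..., c (n-1) matter). *)

Definition cross (a1 a2 b1 b2 : R) : R := a1 * b2 - a2 * b1.

Definition on_line (n : nat) (sx sy c : nat -> R) (i : nat) (x y : R) : Prop :=
  cross (sx (i mod n)) (sy (i mod n)) x y = c (i mod n).

(* Vertex v_i = e_i ∩ e_{i+1} (indices mod n), by Cramer's rule. *)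
Definition vx (n : nat) (sx sy c : nat -> R) (i : nat) : R :=
  let j := (i mod n)%nat in let k := ((i + 1) mod n)%nat in
  (c j * sx k - c k * sx j) / cross (sx j) (sy j) (sx k) (sy k).

Definition vy (n : nat) (sx sy c : nat -> R) (i : nat) : R :=
  let j := (i mod n)%nat in let k := ((i + 1) mod n)%nat in
  (c j * sy k - c k * sy j) / cross (sx j) (sy j) (sx k) (sy k).

Lemma vertex_on_lines (n : nat) (sx sy c : nat -> R) (i : nat) :
  let j := (i mod n)%nat in let k := ((i + 1) mod n)%nat in
  cross (sx j) (sy j) (sx k) (sy k) <> 0 ->
  on_line n sx sy c i (vx n sx sy c i) (vy n sx sy c i) /\
  on_line n sx sy c (i + 1) (vx n sx sy c i) (vy n sx sy c i).
Proof.
  intros j k H. unfold on_line, vx, vy, cross in *. fold j k. split; field; exact H.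
Qed.

Definition Area (n : nat) (sx sy c : nat -> R) : R :=
  / 2 * sum_f_R0 (fun i => vx n sx sy c i * vy n sx sy c (i + 1)
                         - vx n sx sy c (i + 1) * vy n sx sy c i) (n - 1).

(* Edge i is the segment v_i v_{i+1}; it lies on the line e_{i+1}
   (as v_i, v_{i+1} are both on e_{i+1}). *)
Definition edge_dx (n : nat) (sx sy c : nat -> R) (i : nat) : R :=
  vx n sx sy c (i + 1) - vx n sx sy c i.
Definition edge_dy (n : nat) (sx sy c : nat -> R) (i : nat) : R :=
  vy n sx sy c (i + 1) - vy n sx sy c i.

Definition edge_sign (n : nat) (sx sy c : nat -> R) (i : nat) : R :=
  let k := ((i + 1) mod n)%nat in
  if Rlt_dec 0 (edge_dx n sx sy c i * sx k + edge_dy n sx sy c i * sy k)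
  then 1 else -1.

Definition edge_len (n : nat) (sx sy c : nat -> R) (i : nat) : R :=
  sqrt (edge_dx n sx sy c i ^ 2 + edge_dy n sx sy c i ^ 2).

Definition Perim (n : nat) (sx sy c : nat -> R) : R :=
  sum_f_R0 (fun i => edge_sign n sx sy c i * edge_len n sx sy c i) (n - 1).

Definition dist_to_line (n : nat) (sx sy c : nat -> R) (i : nat) (x y : R) : R :=
  let j := (i mod n)%nat in
  Rabs (cross (sx j) (sy j) x y - c j) / sqrt (sx j ^ 2 + sy j ^ 2).

Definition circle_left_of (n : nat) (sx sy c : nat -> R) (i : nat) (ox oy r : R) : Prop :=
  forall x y, (x - ox) ^ 2 + (y - oy) ^ 2 = r ^ 2 ->
    cross (sx (i mod n)) (sy (i mod n)) x y - c (i mod n) >= 0.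

Definition circle_right_of (n : nat) (sx sy c : nat -> R) (i : nat) (ox oy r : R) : Prop :=
  forall x y, (x - ox) ^ 2 + (y - oy) ^ 2 = r ^ 2 ->
    cross (sx (i mod n)) (sy (i mod n)) x y - c (i mod n) <= 0.

Definition Tangential (n : nat) (sx sy c : nat -> R) : Prop :=
  exists ox oy r : R, 0 < r /\
    (forall i, (i < n)%nat -> dist_to_line n sx sy c i ox oy = r) /\
    ((forall i, (i < n)%nat -> circle_left_of n sx sy c i ox oy r) \/
     (forall i, (i < n)%nat -> circle_right_of n sx sy c i ox oy r)).

(* Q is a critical point of P restricted to S = {|A| = 1}: for every curve g
   in the space of polygons, passing through Q at t = 0, differentiable at 0,
   and staying in S for t near 0, the derivative of P along g at 0 vanishes.
   (Curves are taken in offset space R^n; P and A are translation invariant and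
   curves in the quotient by translations lift to R^n, so this is the same as
   criticality on S ⊂ S~ = R^n / translations.) *)
Definition Critical (n : nat) (sx sy c : nat -> R) : Prop :=
  forall g : R -> nat -> R,
    (forall i, (i < n)%nat -> g 0 i = c i) ->
    (forall i, (i < n)%nat -> exists l, derivable_pt_lim (fun t => g t i) 0 l) ->
    (exists eps, 0 < eps /\ forall t, Rabs t < eps -> Rabs (Area n sx sy (g t)) = 1) ->
    derivable_pt_lim (fun t => Perim n sx sy (g t)) 0 0.

(* Main.v *)
Require Import Defs.
From Stdlib Require Import Reals Lra Lia Arith.
Open Scope R_scope.

Lemma dl_ext (f g : R -> R) x l : (forall t, f t = g t) -> derivable_pt_lim f x l -> derivable_pt_lim g x l.
Proof.
  intros E Hf eps He. destruct (Hf eps He) as [d Hd]. exists d. intros h H1 H2.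
  rewrite <- !E. apply Hd; auto.
Qed.

Lemma dl_val (f : R -> R) x l l' : derivable_pt_lim f x l -> l = l' -> derivable_pt_lim f x l'.
Proof. intros H E; subst; auto. Qed.

Lemma dl_plus (f g : R -> R) x l1 l2 : derivable_pt_lim f x l1 -> derivable_pt_lim g x l2 ->
  derivable_pt_lim (fun t => f t + g t) x (l1 + l2).
Proof. intros; apply derivable_pt_lim_plus; auto. Qed.

Lemma dl_mult (f g : R -> R) x l1 l2 : derivable_pt_lim f x l1 -> derivable_pt_lim g x l2 ->
  derivable_pt_lim (fun t => f t * g t) x (l1 * g x + f x * l2).
Proof. intros; apply derivable_pt_lim_mult; auto. Qed.

Lemma dl_const a x : derivable_pt_lim (fun _ => a) x 0.
Proof. apply derivable_pt_lim_const. Qed.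

Lemma dl_id x : derivable_pt_lim (fun t => t) x 1.
Proof. apply derivable_pt_lim_id. Qed.

Lemma dl_scal (f : R -> R) a x l : derivable_pt_lim f x l -> derivable_pt_lim (fun t => a * f t) x (a * l).
Proof.
  intros H. apply (dl_ext (fun t => (fun _ => a) t * f t)); [reflexivity|].
  replace (a * l) with (0 * f x + a * l) by ring. apply dl_mult; auto. apply dl_const.
Qed.

Lemma dl_sum (F : nat -> R -> R) (l : nat -> R) x N :
  (forall i, (i <= N)%nat -> derivable_pt_lim (F i) x (l i)) ->
  derivable_pt_lim (fun t => sum_f_R0 (fun i => F i t) N) x (sum_f_R0 l N).
Proof.
  induction N; intros H; simpl.
  - apply H; lia.
  - apply dl_plus; [apply IHN; intros; apply H; lia| apply H; lia].
Qed.

Lemma fin_choice (P : nat -> R -> Prop) m :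
  (forall i, (i < m)%nat -> exists l, P i l) -> exists d : nat -> R, forall i, (i < m)%nat -> P i (d i).
Proof.
  induction m; intros H.
  - exists (fun _ => 0). intros; lia.
  - destruct IHm as [d Hd]. { intros; apply H; lia. }
    destruct (H m ltac:(lia)) as [l Hl].
    exists (fun i => if Nat.eq_dec i m then l else d i).
    intros i Hi. destruct (Nat.eq_dec i m) as [->|E]; auto. apply Hd; lia.
Qed.

Lemma loc_const (f : R -> R) l :
  derivable_pt_lim f 0 l ->
  (exists eps, 0 < eps /\ forall t, Rabs t < eps -> Rabs (f t) = 1) ->
  derivable_pt_lim f 0 0.
Proof.
  intros Hd [e0 [He0 Hc]].
  assert (Hcont : continuity_pt f 0) by (apply derivable_continuous_pt; exists l; auto).
  destruct (Hcont 1 ltac:(lra)) as [a [Ha Hca]].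
  assert (F0 : Rabs (f 0) = 1) by (apply Hc; rewrite Rabs_R0; lra).
  intros eps Heps.
  assert (Hp : 0 < Rmin e0 a) by (apply Rmin_pos; lra).
  exists (mkposreal _ Hp). intros h Hh Hhd. simpl in Hhd.
  assert (h1 : Rabs h < e0) by (eapply Rlt_le_trans; [exact Hhd| apply Rmin_l]).
  assert (h2 : Rabs h < a) by (eapply Rlt_le_trans; [exact Hhd| apply Rmin_r]).
  assert (Fh : Rabs (f h) = 1) by auto.
  assert (Dh : Rabs (f h - f 0) < 1).
  { specialize (Hca h). simpl in Hca. unfold R_dist in Hca. apply Hca. split.
    - unfold D_x, no_cond. split; auto.
    - rewrite Rminus_0_r. auto. }
  assert (Eq : f h = f 0).
  { revert Fh F0 Dh. unfold Rabs. destruct (Rcase_abs (f h)), (Rcase_abs (f 0)), (Rcase_abs (f h - f 0)); lra. }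
  rewrite Rplus_0_l, Eq. replace ((f 0 - f 0) / h - 0) with 0 by (field; auto). rewrite Rabs_R0. auto.
Qed.

Section S.
Variable n : nat.
Variables sx sy : nat -> R.
Hypothesis Hn : (3 <= n)%nat.
Hypothesis Hnp : forall i j, (i < n)%nat -> (j < n)%nat -> i <> j ->
     cross (sx i) (sy i) (sx j) (sy j) <> 0.

Definition nx (j : nat) : nat := ((j + 1) mod n)%nat.
Definition D (i j : nat) : R := cross (sx i) (sy i) (sx j) (sy j).

Lemma nx_cases i : (i < n)%nat -> ((i + 1 < n)%nat /\ nx i = (i + 1)%nat) \/ (i + 1 = n /\ nx i = 0)%nat.
Proof.
  intros H. unfold nx. destruct (Nat.eq_dec (i+1) n) as [E|E].
  - right. split; auto. rewrite E. apply Nat.Div0.mod_same.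
  - left. split; [lia|]. apply Nat.mod_small. lia.
Qed.

Lemma nx_lt i : (nx i < n)%nat.
Proof. unfold nx. apply Nat.mod_upper_bound. lia. Qed.

Lemma nx_neq i : (i < n)%nat -> nx i <> i.
Proof. intros H. destruct (nx_cases i H) as [[A E]|[A E]]; rewrite E; lia. Qed.

Lemma nxnx_neq i : (i < n)%nat -> nx (nx i) <> i.
Proof.
  intros H. destruct (nx_cases i H) as [[A E]|[A E]]; rewrite E.
  - destruct (nx_cases (i+1) A) as [[B F]|[B F]]; rewrite F; lia.
  - destruct (nx_cases 0 ltac:(lia)) as [[B F]|[B F]]; rewrite F; lia.
Qed.

Lemma mod_i i : (i < n)%nat -> (i mod n = i)%nat.
Proof. intros; apply Nat.mod_small; auto. Qed.

Lemma mod_i2 i : ((i + 1 + 1) mod n = nx (nx i))%nat.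
Proof. unfold nx. rewrite Nat.Div0.add_mod_idemp_l. reflexivity. Qed.

Lemma Dne i j : (i < n)%nat -> (j < n)%nat -> i <> j -> D i j <> 0.
Proof. intros; apply Hnp; auto. Qed.

Definition T (c : nat -> R) (i : nat) : R :=
  c (nx (nx i)) / D (nx (nx i)) (nx i) - c i / D i (nx i)
  + c (nx i) * D (nx (nx i)) i / (D i (nx i) * D (nx (nx i)) (nx i)).

Definition Bf (c w : nat -> R) : R := sum_f_R0 (fun i => w (nx i) * T c i) (n - 1).

Definition ell (k : nat) : R := sqrt (sx k ^ 2 + sy k ^ 2).

Lemma D1 i : (i < n)%nat -> D i (nx i) <> 0.
Proof. intros H. apply Dne; auto using nx_lt. intro E; apply (nx_neq i H); auto. Qed.
Lemma D2 i : (i < n)%nat -> D (nx (nx i)) (nx i) <> 0.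
Proof. intros H. apply Dne; auto using nx_lt. apply nx_neq, nx_lt. Qed.

Lemma vx_i c i : (i < n)%nat ->
  vx n sx sy c i = (c i * sx (nx i) - c (nx i) * sx i) / D i (nx i).
Proof. intros H. unfold vx. rewrite (mod_i i H). reflexivity. Qed.
Lemma vy_i c i : (i < n)%nat ->
  vy n sx sy c i = (c i * sy (nx i) - c (nx i) * sy i) / D i (nx i).
Proof. intros H. unfold vy. rewrite (mod_i i H). reflexivity. Qed.
Lemma vx_i1 c i :
  vx n sx sy c (i+1) = (c (nx i) * sx (nx (nx i)) - c (nx (nx i)) * sx (nx i)) / D (nx i) (nx (nx i)).
Proof. unfold vx. rewrite mod_i2. reflexivity. Qed.
Lemma vy_i1 c i :
  vy n sx sy c (i+1) = (c (nx i) * sy (nx (nx i)) - c (nx (nx i)) * sy (nx i)) / D (nx i) (nx (nx i)).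
Proof. unfold vy. rewrite mod_i2. reflexivity. Qed.

Lemma edge_x c i : (i < n)%nat -> vx n sx sy c (i+1) - vx n sx sy c i = T c i * sx (nx i).
Proof.
  intros H. rewrite vx_i1, vx_i by auto. unfold T.
  pose proof (D1 i H). pose proof (D2 i H).
  assert (D (nx i) (nx (nx i)) <> 0) by (apply D1, nx_lt).
  unfold D, cross in *. field. auto.
Qed.
Lemma edge_y c i : (i < n)%nat -> vy n sx sy c (i+1) - vy n sx sy c i = T c i * sy (nx i).
Proof.
  intros H. rewrite vy_i1, vy_i by auto. unfold T.
  pose proof (D1 i H). pose proof (D2 i H).
  assert (D (nx i) (nx (nx i)) <> 0) by (apply D1, nx_lt).
  unfold D, cross in *. field. auto.
Qed.
Lemma area_term c i : (i < n)%nat ->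
  vx n sx sy c i * vy n sx sy c (i + 1) - vx n sx sy c (i + 1) * vy n sx sy c i
  = - (c (nx i) * T c i).
Proof.
  intros H. rewrite vx_i1, vx_i, vy_i1, vy_i by auto. unfold T.
  pose proof (D1 i H). pose proof (D2 i H).
  assert (D (nx i) (nx (nx i)) <> 0) by (apply D1, nx_lt).
  unfold D, cross in *. field. auto.
Qed.

Lemma sum_scal (f : nat -> R) a N : sum_f_R0 (fun i => a * f i) N = a * sum_f_R0 f N.
Proof. induction N; simpl; [ring|rewrite IHN; ring]. Qed.
Lemma sum_add (f g : nat -> R) N : sum_f_R0 (fun i => f i + g i) N = sum_f_R0 f N + sum_f_R0 g N.
Proof. induction N; simpl; [ring|rewrite IHN; ring]. Qed.

Lemma Area_Bf c : Area n sx sy c = - / 2 * Bf c c.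
Proof.
  unfold Area, Bf. rewrite (sum_eq _ (fun i => -1 * (c (nx i) * T c i))).
  - rewrite sum_scal. ring.
  - intros i Hi. rewrite area_term by lia. ring.
Qed.

Lemma s_pos k : (k < n)%nat -> 0 < sx k ^ 2 + sy k ^ 2.
Proof.
  intros H. pose proof (D1 k H) as E. unfold D, cross in E.
  destruct (Req_dec (sx k) 0) as [A|A].
  - destruct (Req_dec (sy k) 0) as [B|B].
    + exfalso; apply E; rewrite A, B; ring.
    + assert (0 < (sy k)²) by (apply Rsqr_pos_lt; auto). assert (0 <= (sx k)²) by apply Rle_0_sqr. unfold Rsqr in *. simpl. lra.
  - assert (0 < (sx k)²) by (apply Rsqr_pos_lt; auto). assert (0 <= (sy k)²) by apply Rle_0_sqr. unfold Rsqr in *. simpl. lra.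
Qed.

Lemma ell_pos k : (k < n)%nat -> 0 < ell k.
Proof. intros H. unfold ell. apply sqrt_lt_R0, s_pos, H. Qed.

Lemma ell_sq k : (k < n)%nat -> ell k * ell k = sx k ^ 2 + sy k ^ 2.
Proof. intros H. unfold ell. apply sqrt_sqrt. left; apply s_pos, H. Qed.

Lemma perim_term c i : (i < n)%nat ->
  edge_sign n sx sy c i * edge_len n sx sy c i = T c i * ell (nx i).
Proof.
  intros H. unfold edge_sign, edge_len, edge_dx, edge_dy.
  rewrite (edge_x c i H), (edge_y c i H).
  fold (nx i).
  pose proof (s_pos (nx i) (nx_lt i)) as Sp.
  set (X := sx (nx i) ^ 2 + sy (nx i) ^ 2) in *.
  assert (E : (T c i * sx (nx i)) ^ 2 + (T c i * sy (nx i)) ^ 2 = (T c i)² * X)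
    by (unfold X, Rsqr; ring).
  rewrite E, sqrt_mult_alt, sqrt_Rsqr_abs by apply Rle_0_sqr.
  fold (ell (nx i)) in *. unfold X; fold (ell (nx i)).
  assert (Ed : T c i * sx (nx i) * sx (nx i) + T c i * sy (nx i) * sy (nx i) = T c i * X)
    by (unfold X; ring).
  rewrite Ed.
  destruct (Rlt_dec 0 (T c i * X)) as [L|L].
  - assert (0 < T c i) by (destruct (Rle_lt_dec (T c i) 0); nra).
    rewrite Rabs_right by lra. ring.
  - assert (T c i <= 0) by (destruct (Rle_lt_dec (T c i) 0); [auto|exfalso; apply L; nra]).
    rewrite Rabs_left1 by lra. ring.
Qed.

Lemma Perim_Bf c : Perim n sx sy c = Bf c ell.
Proof.
  unfold Perim, Bf. apply sum_eq. intros i Hi. rewrite perim_term by lia. ring.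
Qed.


Lemma T_ext c c' i : (i < n)%nat -> (forall k, (k < n)%nat -> c k = c' k) -> T c i = T c' i.
Proof.
  intros H E. unfold T. rewrite (E i H), (E (nx i) (nx_lt i)), (E (nx (nx i)) (nx_lt _)). reflexivity.
Qed.

Lemma Bf_ext c c' w w' : (forall k, (k < n)%nat -> c k = c' k) -> (forall k, (k < n)%nat -> w k = w' k) ->
  Bf c w = Bf c' w'.
Proof.
  intros E F. unfold Bf. apply sum_eq. intros i Hi.
  rewrite (T_ext c c' i) by (auto; lia). rewrite (F _ (nx_lt i)). reflexivity.
Qed.

Lemma T_lin a b c w i : T (fun k => a * c k + b * w k) i = a * T c i + b * T w i.
Proof. unfold T, Rdiv. ring. Qed.

Lemma Bf_lin1 a b c w x : Bf (fun k => a * c k + b * w k) x = a * Bf c x + b * Bf w x.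
Proof.
  unfold Bf. rewrite <- !sum_scal, <- sum_add. apply sum_eq. intros i _. rewrite T_lin. ring.
Qed.

Lemma Bf_lin2 a b c x y : Bf c (fun k => a * x k + b * y k) = a * Bf c x + b * Bf c y.
Proof.
  unfold Bf. rewrite <- !sum_scal, <- sum_add. apply sum_eq. intros i _. ring.
Qed.

Lemma sum_shift (f : nat -> R) : sum_f_R0 (fun i => f (nx i)) (n - 1) = sum_f_R0 f (n - 1).
Proof.
  replace (n - 1)%nat with (S (n - 2)) by lia.
  rewrite tech5. rewrite (decomp_sum f (S (n - 2))) by lia. simpl pred.
  assert (Hl : nx (S (n - 2)) = 0%nat).
  { destruct (nx_cases (S (n - 2)) ltac:(lia)) as [[A _]|[_ B]]; [lia|auto]. }
  rewrite Hl.
  rewrite (sum_eq (fun i => f (nx i)) (fun i => f (S i))). ring.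
  intros i Hi. destruct (nx_cases i ltac:(lia)) as [[_ B]|[A _]]; [rewrite B; f_equal; lia| lia].
Qed.

Lemma Bf_sym c w : Bf c w = Bf w c.
Proof.
  unfold Bf.
  set (F := fun i => (w (nx i) * c (nx (nx i)) - c (nx i) * w (nx (nx i))) / D (nx (nx i)) (nx i)).
  set (G := fun i => - (w (nx i) * c i - c (nx i) * w i) / D i (nx i)).
  assert (HG : forall i, (i <= n - 1)%nat -> G (nx i) = - F i).
  { intros i Hi. unfold G, F. pose proof (D2 i ltac:(lia)).
    assert (D (nx (nx i)) (nx i) = - D (nx i) (nx (nx i))) by (unfold D, cross; ring).
    rewrite H0 in *. field. intro Z; apply H; lra. }
  assert (E : sum_f_R0 (fun i => w (nx i) * T c i) (n - 1) - sum_f_R0 (fun i => c (nx i) * T w i) (n - 1)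
            = sum_f_R0 (fun i => F i + G i) (n - 1)).
  { rewrite <- minus_sum. apply sum_eq. intros i _. unfold T, F, G, Rdiv. ring. }
  rewrite sum_add in E. rewrite <- (sum_shift G) in E.
  rewrite (sum_eq (fun i => G (nx i)) (fun i => -1 * F i)) in E by (intros; rewrite HG; auto; ring).
  rewrite sum_scal in E. lra.
Qed.

Definition tau (ox oy : R) (k : nat) : R := cross (sx k) (sy k) ox oy.

Lemma T_tau ox oy i : (i < n)%nat -> T (tau ox oy) i = 0.
Proof.
  intros H. unfold T, tau. pose proof (D1 i H). pose proof (D2 i H).
  unfold D, cross in *. field. auto.
Qed.

Lemma Bf_tau ox oy w : Bf (tau ox oy) w = 0.
Proof.
  unfold Bf. rewrite (sum_eq _ (fun i => 0 * 0)). 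
  - rewrite sum_scal. ring.
  - intros i Hi. rewrite T_tau by lia. ring.
Qed.


Lemma dT (G : R -> nat -> R) d i : (i < n)%nat ->
  (forall k, (k < n)%nat -> derivable_pt_lim (fun t => G t k) 0 (d k)) ->
  derivable_pt_lim (fun t => T (G t) i) 0 (T d i).
Proof.
  intros Hi Hd.
  set (a1 := / D (nx (nx i)) (nx i)). set (a2 := - / D i (nx i)).
  set (a3 := D (nx (nx i)) i / (D i (nx i) * D (nx (nx i)) (nx i))).
  assert (E : forall c, T c i = a1 * c (nx (nx i)) + a2 * c i + a3 * c (nx i)).
  { intros c. unfold T, a1, a2, a3, Rdiv. ring. }
  apply (dl_ext (fun t => a1 * G t (nx (nx i)) + a2 * G t i + a3 * G t (nx i))).
  { intros; rewrite E; reflexivity. }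
  rewrite E. repeat apply dl_plus; apply dl_scal; apply Hd; auto using nx_lt.
Qed.

Lemma dBf1 (G : R -> nat -> R) d w :
  (forall k, (k < n)%nat -> derivable_pt_lim (fun t => G t k) 0 (d k)) ->
  derivable_pt_lim (fun t => Bf (G t) w) 0 (Bf d w).
Proof.
  intros Hd. unfold Bf. apply (dl_sum (fun i t => w (nx i) * T (G t) i)).
  intros i Hi. apply dl_scal. apply dT; auto; lia.
Qed.

Lemma dBf2 (G : R -> nat -> R) d :
  (forall k, (k < n)%nat -> derivable_pt_lim (fun t => G t k) 0 (d k)) ->
  derivable_pt_lim (fun t => Bf (G t) (G t)) 0 (Bf (G 0) d + Bf d (G 0)).
Proof.
  intros Hd. unfold Bf. rewrite <- sum_add.
  apply (dl_sum (fun i t => G t (nx i) * T (G t) i)).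
  intros i Hi.
  replace (d (nx i) * T (G 0) i + G 0 (nx i) * T d i) with
    (d (nx i) * (fun t => T (G t) i) 0 + (fun t => G t (nx i)) 0 * T d i) by reflexivity.
  apply (dl_mult (fun t => G t (nx i)) (fun t => T (G t) i)).
  - apply Hd, nx_lt.
  - apply dT; auto; lia.
Qed.

Lemma cross_bound a b x y r : x ^ 2 + y ^ 2 = r ^ 2 -> 0 <= r ->
  Rabs (cross a b x y) <= sqrt (a ^ 2 + b ^ 2) * r.
Proof.
  intros Hc Hr. unfold cross.
  assert (E : (a * y - b * x)² <= (sqrt (a ^ 2 + b ^ 2) * r)²).
  { rewrite Rsqr_mult, Rsqr_sqrt by (apply Rplus_le_le_0_compat; apply pow2_ge_0). unfold Rsqr. replace (r * r) with (x ^ 2 + y ^ 2) by (rewrite Hc; ring).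
    assert (0 <= (a * x + b * y) * (a * x + b * y)) by apply (Rle_0_sqr (a * x + b * y)).
    assert ((a ^ 2 + b ^ 2) * (x ^ 2 + y ^ 2) = (a * y - b * x) * (a * y - b * x) + (a * x + b * y) * (a * x + b * y)) by ring. lra. }
  apply Rsqr_le_abs_0 in E. rewrite (Rabs_right (sqrt _ * r)) in E; auto.
  apply Rle_ge, Rmult_le_pos; auto using sqrt_pos.
Qed.

Lemma tang_form c : Tangential n sx sy c ->
  exists ox oy kap, kap <> 0 /\ forall k, (k < n)%nat -> c k = tau ox oy k + kap * ell k.
Proof.
  intros [ox [oy [r [Hr [Hd Hs]]]]].
  assert (Hdist : forall k, (k < n)%nat -> Rabs (tau ox oy k - c k) = r * ell k).
  { intros k Hk. specialize (Hd k Hk). unfold dist_to_line in Hd. rewrite (mod_i k Hk) in Hd.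
    fold (ell k) in Hd. pose proof (ell_pos k Hk). unfold tau.
    apply (Rmult_eq_compat_r (ell k)) in Hd. rewrite <- Hd. field. lra. }
  destruct Hs as [Hs|Hs]; [exists ox, oy, (- r)|exists ox, oy, r]; (split; [lra|]); intros k Hk;
    specialize (Hs k Hk); pose proof (ell_pos k Hk); pose proof (ell_sq k Hk);
    specialize (Hdist k Hk); unfold circle_left_of, circle_right_of in Hs; rewrite (mod_i k Hk) in Hs.
  - set (p := ox + r / ell k * sy k). set (q := oy - r / ell k * sx k).
    assert (Hpq : (p - ox) ^ 2 + (q - oy) ^ 2 = r ^ 2).
    { unfold p, q. replace (r ^ 2) with ((r / ell k) ^ 2 * (ell k * ell k)) by (field; lra).
      rewrite H0. ring. }
    specialize (Hs p q Hpq).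
    assert (Ec : cross (sx k) (sy k) p q = tau ox oy k - r * ell k).
    { unfold tau, p, q. transitivity (cross (sx k) (sy k) ox oy - r / ell k * (sx k ^ 2 + sy k ^ 2)).
      { unfold cross; ring. } rewrite <- H0. field. lra. }
    rewrite Ec in Hs. revert Hdist. unfold Rabs. destruct Rcase_abs; intros; nra.
  - set (p := ox - r / ell k * sy k). set (q := oy + r / ell k * sx k).
    assert (Hpq : (p - ox) ^ 2 + (q - oy) ^ 2 = r ^ 2).
    { unfold p, q. replace (r ^ 2) with ((r / ell k) ^ 2 * (ell k * ell k)) by (field; lra).
      rewrite H0. ring. }
    specialize (Hs p q Hpq).
    assert (Ec : cross (sx k) (sy k) p q = tau ox oy k + r * ell k).
    { unfold tau, p, q. transitivity (cross (sx k) (sy k) ox oy + r / ell k * (sx k ^ 2 + sy k ^ 2)).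
      { unfold cross; ring. } rewrite <- H0. field. lra. }
    rewrite Ec in Hs. revert Hdist. unfold Rabs. destruct Rcase_abs; intros; nra.
Qed.


Lemma tang_crit c : Tangential n sx sy c -> Critical n sx sy c.
Proof.
  intros Ht g Hg0 Hgd Hgs.
  destruct (tang_form c Ht) as [ox [oy [kap [Hk Hc]]]].
  destruct (fin_choice (fun i l => derivable_pt_lim (fun t => g t i) 0 l) n Hgd) as [d Hd].
  assert (HA : derivable_pt_lim (fun t => Area n sx sy (g t)) 0 (-/2 * (Bf (g 0) d + Bf d (g 0)))).
  { apply (dl_ext (fun t => -/2 * Bf (g t) (g t))).
    - intros; rewrite Area_Bf; reflexivity.
    - apply dl_scal, dBf2; auto. }
  pose proof (loc_const _ _ HA Hgs) as HA0.
  pose proof (uniqueness_limite _ _ _ _ HA HA0) as E.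
  assert (E2 : Bf (g 0) d = kap * Bf d ell).
  { rewrite (Bf_ext (g 0) (fun k => 1 * tau ox oy k + kap * ell k) d d)
      by (intros; first [rewrite Hg0, Hc by auto; ring | reflexivity]).
    rewrite Bf_lin1, Bf_tau, (Bf_sym ell d). ring. }
  rewrite (Bf_sym d (g 0)) in E.
  assert (Z : Bf d ell = 0).
  { rewrite E2 in E. apply (Rmult_eq_reg_l kap); [|auto]. lra. }
  apply (dl_ext (fun t => Bf (g t) ell)).
  - intros; rewrite Perim_Bf; reflexivity.
  - pose proof (dBf1 g d ell Hd) as H. rewrite Z in H. exact H.
Qed.


Lemma Bf_quad al be c w :
  Bf (fun k => al * c k + be * w k) (fun k => al * c k + be * w k)
  = al * al * Bf c c + al * be * (Bf c w + Bf w c) + be * be * Bf w w.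
Proof. rewrite Bf_lin1, !Bf_lin2. ring. Qed.

Lemma crit_orth c : Critical n sx sy c -> Rabs (Area n sx sy c) = 1 ->
  forall w, Bf c w = 0 -> Bf w ell = 0.
Proof.
  intros Hcr Ha w Hw.
  set (a := Area n sx sy c). set (q := Area n sx sy w).
  assert (Ha2 : a * a = 1).
  { revert Ha. fold a. unfold Rabs. destruct Rcase_abs; intros; nra. }
  set (phi := fun t : R => 1 + a * q * (t * t)).
  set (hh := fun t : R => 1 / sqrt (phi t)).
  set (G := fun t k => (c k + t * w k) * hh t).
  assert (Hphi0 : phi 0 = 1) by (unfold phi; ring).
  assert (Hh0 : hh 0 = 1) by (unfold hh; rewrite Hphi0, sqrt_1; field).
  assert (Dphi : derivable_pt_lim phi 0 0).
  { unfold phi. replace 0 with (0 + a * q * (1 * 0 + 0 * 1)) at 2 by ring.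
    apply dl_plus; [apply dl_const|]. apply dl_scal.
    apply (dl_mult (fun t => t) (fun t => t)); apply dl_id. }
  assert (Dhh : derivable_pt_lim hh 0 0).
  { assert (Ds : derivable_pt_lim (comp sqrt phi) 0 (/ (2 * sqrt (phi 0)) * 0)).
    { apply derivable_pt_lim_comp; auto. apply derivable_pt_lim_sqrt. rewrite Hphi0. lra. }
    assert (Hn0 : comp sqrt phi 0 <> 0) by (unfold comp; rewrite Hphi0, sqrt_1; lra).
    pose proof (derivable_pt_lim_div (fun _ => 1) (comp sqrt phi) 0 0 _ (dl_const 1 0) Ds Hn0) as Hd.
    apply (dl_ext _ hh) in Hd; [|intros; reflexivity].
    eapply dl_val; [exact Hd|]. unfold Rsqr. field. split; [rewrite Hphi0, sqrt_1; lra|exact Hn0]. }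
  assert (DG : forall k, (k < n)%nat -> derivable_pt_lim (fun t => G t k) 0 (w k)).
  { intros k Hk. unfold G.
    eapply dl_val.
    - apply (dl_mult (fun t => c k + t * w k) hh); [|exact Dhh].
      apply dl_plus; [apply dl_const|].
      apply (dl_ext (fun t => w k * t)); [intros; ring|].
      apply dl_scal, dl_id.
    - rewrite Hh0. ring. }
  set (eps := / (Rabs q + 1)).
  assert (Heps : 0 < eps) by (unfold eps; apply Rinv_0_lt_compat; pose proof (Rabs_pos q); lra).
  assert (Hpos : forall t, Rabs t < eps -> 0 < phi t).
  { intros t Ht. unfold phi.
    assert (Hq : Rabs q * (t * t) < 1).
    { assert (Htt : t * t < eps * eps).
      { pose proof (Rabs_pos t).
        replace (t * t) with (Rabs t * Rabs t) by (rewrite <- Rabs_mult; apply Rabs_right; nra). nra. }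
      pose proof (Rabs_pos q).
      assert (eps * eps * (Rabs q + 1) <= 1).
      { unfold eps. replace (/ (Rabs q + 1) * / (Rabs q + 1) * (Rabs q + 1)) with (/ (Rabs q + 1)) by (field; lra).
        rewrite <- Rinv_1. apply Rinv_le_contravar; lra. }
      assert (0 <= t * t) by nra. nra. }
    assert (Rabs (a * q * (t * t)) <= Rabs q * (t * t)).
    { rewrite (Rabs_mult (a * q) (t * t)), (Rabs_mult a q). fold a in Ha. rewrite Ha.
      rewrite (Rabs_right (t * t)) by nra. lra. }
    assert (- (a * q * (t * t)) <= Rabs (a * q * (t * t))) by (rewrite <- Rabs_Ropp; apply Rle_abs).
    lra. }
  assert (HAG : forall t, Rabs t < eps -> Area n sx sy (G t) = a).
  { intros t Ht. specialize (Hpos t Ht).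
    rewrite Area_Bf.
    rewrite (Bf_ext (G t) (fun k => hh t * c k + (t * hh t) * w k) (G t) (fun k => hh t * c k + (t * hh t) * w k))
      by (intros; unfold G; ring).
    rewrite Bf_quad, Hw, (Bf_sym w c), Hw.
    assert (Ac : Bf c c = -2 * a) by (unfold a; rewrite Area_Bf; field).
    assert (Aw : Bf w w = -2 * q) by (unfold q; rewrite Area_Bf; field).
    rewrite Ac, Aw.
    assert (Hs : hh t * hh t = / phi t).
    { unfold hh. pose proof (sqrt_lt_R0 _ Hpos). rewrite <- (sqrt_sqrt (phi t)) at 3 by lra. field. lra. }
    transitivity (hh t * hh t * (a + q * (t * t))); [field|].
    replace (a + q * (t * t)) with (a * phi t).
    - rewrite Hs. field. lra.
    - unfold phi. transitivity (a + a * a * q * (t * t)); [ring|]. rewrite Ha2. ring. }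
  assert (Hd : derivable_pt_lim (fun t => Perim n sx sy (G t)) 0 0).
  { apply Hcr.
    - intros i Hi. unfold G. rewrite Hh0. ring.
    - intros i Hi. exists (w i). auto.
    - exists eps. split; auto. intros t Ht. rewrite HAG; auto. }
  assert (Hd2 : derivable_pt_lim (fun t => Perim n sx sy (G t)) 0 (Bf w ell)).
  { apply (dl_ext (fun t => Bf (G t) ell)); [intros; rewrite Perim_Bf; auto|]. apply dBf1; auto. }
  exact (uniqueness_limite _ _ _ _ Hd2 Hd).
Qed.


Lemma sum_sq0 (f : nat -> R) N : sum_f_R0 (fun i => f i * f i) N = 0 -> forall i, (i <= N)%nat -> f i = 0.
Proof.
  induction N; intros H i Hi; simpl in H.
  - assert (i = 0%nat) by lia. subst. nra.
  - assert (0 <= sum_f_R0 (fun i => f i * f i) N) by (apply cond_pos_sum; intros; nra).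
    assert (f (S N) * f (S N) = 0) by nra.
    destruct (Nat.eq_dec i (S N)) as [->|E]; [nra|].
    apply IHN; [nra|lia].
Qed.

Lemma pair_par a1 b1 a2 b2 L1 L2 p1 p2 : 0 < L1 -> 0 < L2 ->
  L1 * L1 = a1 ^ 2 + b1 ^ 2 -> L2 * L2 = a2 ^ 2 + b2 ^ 2 ->
  a1 * p1 + b1 * p2 = L1 -> a2 * p1 + b2 * p2 = L2 ->
  (a1 * p2 - b1 * p1) / L1 = (a2 * p2 - b2 * p1) / L2 ->
  a1 * b2 - b1 * a2 = 0.
Proof.
  intros HL1 HL2 E1 E2 P1 P2 Q.
  set (u1 := a1 / L1). set (v1 := b1 / L1). set (u2 := a2 / L2). set (v2 := b2 / L2).
  assert (R1 : u1 * p1 + v1 * p2 = 1).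
  { replace (u1 * p1 + v1 * p2) with ((a1 * p1 + b1 * p2) / L1) by (unfold u1, v1; field; lra). rewrite P1; field; lra. }
  assert (R2 : u2 * p1 + v2 * p2 = 1).
  { replace (u2 * p1 + v2 * p2) with ((a2 * p1 + b2 * p2) / L2) by (unfold u2, v2; field; lra). rewrite P2; field; lra. }
  assert (R3 : u1 * p2 - v1 * p1 = u2 * p2 - v2 * p1).
  { replace (u1 * p2 - v1 * p1) with ((a1 * p2 - b1 * p1) / L1) by (unfold u1, v1; field; lra).
    replace (u2 * p2 - v2 * p1) with ((a2 * p2 - b2 * p1) / L2) by (unfold u2, v2; field; lra). exact Q. }
  assert (Pn : p1 * p1 + p2 * p2 <> 0).
  { intro Z. assert (p1 = 0) by nra. assert (p2 = 0) by nra. subst. lra. }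
  assert (X1 : (u1 - u2) * p1 + (v1 - v2) * p2 = 0) by lra.
  assert (X2 : (u1 - u2) * p2 - (v1 - v2) * p1 = 0) by lra.
  assert (Eu : (u1 - u2) * (p1 * p1 + p2 * p2) = 0).
  { replace ((u1 - u2) * (p1 * p1 + p2 * p2)) with (p1 * ((u1 - u2) * p1 + (v1 - v2) * p2) + p2 * ((u1 - u2) * p2 - (v1 - v2) * p1)) by ring.
    rewrite X1, X2. ring. }
  assert (Ev : (v1 - v2) * (p1 * p1 + p2 * p2) = 0).
  { replace ((v1 - v2) * (p1 * p1 + p2 * p2)) with (p2 * ((u1 - u2) * p1 + (v1 - v2) * p2) - p1 * ((u1 - u2) * p2 - (v1 - v2) * p1)) by ring.
    rewrite X1, X2. ring. }
  apply Rmult_integral in Eu. apply Rmult_integral in Ev.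
  destruct Eu as [Eu|Eu]; [|contradiction]. destruct Ev as [Ev|Ev]; [|contradiction].
  assert (a1 = u1 * L1) by (unfold u1; field; lra).
  assert (b1 = v1 * L1) by (unfold v1; field; lra).
  assert (a2 = u2 * L2) by (unfold u2; field; lra).
  assert (b2 = v2 * L2) by (unfold v2; field; lra).
  assert (u1 = u2) by lra. assert (v1 = v2) by lra.
  rewrite H, H0, H1, H2, H3, H4. ring.
Qed.

Lemma esq a b L p1 p2 : 0 < L -> L * L = a ^ 2 + b ^ 2 -> a * p1 + b * p2 = L ->
  ((a * p2 - b * p1) / L) ^ 2 = p1 ^ 2 + p2 ^ 2 - 1.
Proof.
  intros HL E P.
  assert (Id : (a * p2 - b * p1) ^ 2 + (a * p1 + b * p2) ^ 2 = (a ^ 2 + b ^ 2) * (p1 ^ 2 + p2 ^ 2)) by ring.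
  rewrite P, <- E in Id.
  replace (((a * p2 - b * p1) / L) ^ 2) with ((a * p2 - b * p1) ^ 2 / (L * L)) by (field; lra).
  replace ((a * p2 - b * p1) ^ 2) with (L * L * (p1 ^ 2 + p2 ^ 2) - L ^ 2) by lra.
  field. lra.
Qed.

Lemma no_three ox oy : (forall j, (j < n)%nat -> ell j = tau ox oy j) -> False.
Proof.
  intros H.
  assert (Hp : forall j, (j < n)%nat -> sx j * oy + sy j * (- ox) = ell j)
    by (intros j Hj; rewrite H by auto; unfold tau, cross; ring).
  set (e := fun j => (sx j * (- ox) - sy j * oy) / ell j).
  assert (Hs : forall j, (j < n)%nat -> e j ^ 2 = oy ^ 2 + (- ox) ^ 2 - 1).
  { intros j Hj. unfold e. apply esq; auto using ell_pos, ell_sq. }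
  assert (Hpair : forall i j, (i < n)%nat -> (j < n)%nat -> i <> j -> e i = e j -> False).
  { intros i j Hi Hj Hij Eq. apply (Hnp i j Hi Hj Hij). unfold cross.
    apply (pair_par _ _ _ _ (ell i) (ell j) oy (- ox)); auto using ell_pos, ell_sq. }
  assert (H0 := Hs 0%nat ltac:(lia)). assert (H1 := Hs 1%nat ltac:(lia)). assert (H2 := Hs 2%nat ltac:(lia)).
  assert (A : e 0%nat = e 1%nat \/ e 0%nat = - e 1%nat).
  { assert ((e 0%nat - e 1%nat) * (e 0%nat + e 1%nat) = 0) by nra.
    apply Rmult_integral in H3. destruct H3; [left|right]; lra. }
  assert (B : e 0%nat = e 2%nat \/ e 0%nat = - e 2%nat).
  { assert ((e 0%nat - e 2%nat) * (e 0%nat + e 2%nat) = 0) by nra.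
    apply Rmult_integral in H3. destruct H3; [left|right]; lra. }
  destruct A as [A|A]; [apply (Hpair 0 1)%nat; auto; lia|].
  destruct B as [B|B]; [apply (Hpair 0 2)%nat; auto; lia|].
  apply (Hpair 1 2)%nat; auto; try lia. lra.
Qed.


Definition pv (k : nat) : nat := ((k + n - 1) mod n)%nat.

Lemma pv_nx i : (i < n)%nat -> pv (nx i) = i.
Proof.
  intros H. unfold pv. destruct (nx_cases i H) as [[A E]|[A E]]; rewrite E.
  - replace (i + 1 + n - 1)%nat with (i + 1 * n)%nat by lia. rewrite Nat.Div0.mod_add. apply mod_i, H.
  - replace (0 + n - 1)%nat with i by lia. apply mod_i, H.
Qed.

Lemma crit_tang c : Critical n sx sy c -> Rabs (Area n sx sy c) = 1 -> Tangential n sx sy c.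
Proof.
  intros Hcr Ha.
  set (a := Area n sx sy c).
  assert (Ac : Bf c c = -2 * a) by (unfold a; rewrite Area_Bf; field).
  assert (Hcc : Bf c c <> 0).
  { rewrite Ac. intro Z. assert (a = 0) by lra. fold a in Ha. rewrite H, Rabs_R0 in Ha. lra. }
  set (mu := Bf c ell / Bf c c).
  assert (H1 : forall x, Bf ell x = mu * Bf c x).
  { intros x. set (w := fun k => 1 * x k + (- (Bf c x / Bf c c)) * c k).
    assert (Hw : Bf c w = 0) by (unfold w; rewrite Bf_lin2; field; auto).
    pose proof (crit_orth c Hcr Ha w Hw) as Z. unfold w in Z. rewrite Bf_lin1 in Z.
    rewrite Bf_sym. unfold mu.
    assert (Bf x ell = Bf c x / Bf c c * Bf c ell) by lra. rewrite H. field. auto. }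
  set (u := fun k => 1 * ell k + (- mu) * c k).
  assert (H2 : forall x, Bf u x = 0) by (intros x; unfold u; rewrite Bf_lin1, H1; ring).
  assert (H3 : forall i, (i < n)%nat -> T u i = 0).
  { specialize (H2 (fun k => T u (pv k))). unfold Bf in H2.
    rewrite (sum_eq _ (fun i => T u i * T u i)) in H2 by (intros i Hi; rewrite pv_nx by lia; reflexivity).
    intros i Hi. apply (sum_sq0 _ _ H2). lia. }
  assert (Hv : forall i, (i <= n - 1)%nat -> vx n sx sy u i = vx n sx sy u 0 /\ vy n sx sy u i = vy n sx sy u 0).
  { induction i; intros Hi; [auto|].
    destruct IHi as [IH1 IH2]; [lia|].
    pose proof (edge_x u i ltac:(lia)) as E1. pose proof (edge_y u i ltac:(lia)) as E2.
    rewrite H3 in E1, E2 by lia. replace (S i) with (i + 1)%nat by lia. split; lra. }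
  set (ox := vx n sx sy u 0). set (oy := vy n sx sy u 0).
  assert (Hu : forall j, (j < n)%nat -> u j = tau ox oy j).
  { intros j Hj. pose proof (vertex_on_lines n sx sy u j) as V. cbv zeta in V.
    rewrite (mod_i j Hj) in V. fold (nx j) in V.
    destruct (V (D1 j Hj)) as [V1 _]. unfold on_line in V1. rewrite (mod_i j Hj) in V1.
    destruct (Hv j ltac:(lia)) as [A B]. rewrite A, B in V1. unfold tau, ox, oy. rewrite V1. reflexivity. }
  assert (Hmu : mu <> 0).
  { intro Z. apply (no_three ox oy). intros j Hj. rewrite <- Hu by auto. unfold u. rewrite Z. ring. }
  assert (Hc : forall j, (j < n)%nat -> c j = tau (- ox / mu) (- oy / mu) j + ell j / mu).
  { intros j Hj. pose proof (Hu j Hj) as E. unfold u, tau, cross in *. 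
    apply (Rmult_eq_reg_l mu); auto. field_simplify; auto. lra. }
  exists (- ox / mu), (- oy / mu), (/ Rabs mu).
  assert (Hr : 0 < / Rabs mu) by (apply Rinv_0_lt_compat, Rabs_pos_lt, Hmu).
  split; [auto|split].
  - intros i Hi. unfold dist_to_line. rewrite (mod_i i Hi). fold (ell i).
    rewrite Hc by auto. pose proof (ell_pos i Hi).
    replace (cross (sx i) (sy i) (- ox / mu) (- oy / mu) - (tau (- ox / mu) (- oy / mu) i + ell i / mu))
      with (- (ell i / mu)) by (unfold tau; ring).
    rewrite Rabs_Ropp. unfold Rdiv. rewrite Rabs_mult, Rabs_inv, (Rabs_right (ell i)) by lra. field.
    repeat split; try lra; try (apply Rabs_no_R0; auto).
  - destruct (Rle_lt_dec mu 0) as [Hm|Hm]; [left|right]; intros i Hi x y Hxy;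
      rewrite (mod_i i Hi), Hc by auto; pose proof (ell_pos i Hi);
      assert (Hb := cross_bound (sx i) (sy i) (x - - ox / mu) (y - - oy / mu) (/ Rabs mu) Hxy ltac:(lra));
      fold (ell i) in Hb;
      replace (cross (sx i) (sy i) x y - (tau (- ox / mu) (- oy / mu) i + ell i / mu))
        with (cross (sx i) (sy i) (x - - ox / mu) (y - - oy / mu) - ell i / mu) by (unfold tau, cross; ring).
    + assert (mu < 0) by lra. rewrite (Rabs_left mu) in Hb by auto.
      assert (E : ell i * / - mu = - (ell i / mu)) by (field; lra). rewrite E in Hb.
      pose proof (Rle_abs (- cross (sx i) (sy i) (x - - ox / mu) (y - - oy / mu))) as F.
      rewrite Rabs_Ropp in F. lra.
    + rewrite (Rabs_right mu) in Hb by lra.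
      pose proof (Rle_abs (cross (sx i) (sy i) (x - - ox / mu) (y - - oy / mu))) as F.
      replace (ell i * / mu) with (ell i / mu) in Hb by reflexivity. lra.
Qed.

End S.

Theorem mainTheorem5 (n : nat) (sx sy : nat -> R) (c : nat -> R) :
  (3 <= n)%nat ->
  (forall i j, (i < n)%nat -> (j < n)%nat -> i <> j ->
     cross (sx i) (sy i) (sx j) (sy j) <> 0) ->
  Rabs (Area n sx sy c) = 1 ->
  (Critical n sx sy c <-> Tangential n sx sy c).
Proof.
  intros Hn Hnp Ha. split.
  - intros Hc. apply crit_tang; auto.
  - intros Ht. apply tang_crit; auto.
Qed.
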